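(* Let $T\to T'$ be a homomorphism of unital rings, where both $T$ and $T'$ are commutative domains in which $2$ is not a zero divisor and in which the images of all affine roots in $\widehat X\otimes T$ (resp. $\widehat X\otimes T'$) are nonzero. Then for every sequence ${\mathbf s}$ in $\widehat{\mathcal S}$ the canonical isomorphism $\big(\bigoplus_{\sigma\in I({\mathbf s})}S_T\big)\otimes_TT'=\bigoplus_{\sigma\in I({\mathbf s})}S_{T'}$ identifies ${\mathcal X}_T({\mathbf s})\otimes_TT'$ with ${\mathcal X}_{T'}({\mathbf s})$.
   Context: $R$ irreducible reduced finite root system (positive roots $R^+$, simple roots $\Pi$, highest root $\gamma$); $\widehat X=X\oplus\mathbb Z$, $\delta=(0,-1)$, affine roots $\alpha+n\delta$. $\widehat{\mathcal W}$ generated by $s_{\alpha,n}(v,m)=(v-(\langle\alpha,v\rangle-mn)\alpha^\vee,m)$, acting contragrediently on $\widehat X$; $\widehat{\mathcal S}=\{s_{\alpha,0}:\alpha\in\Pi\}\cup\{s_{\gamma,1}\}$ with simple affine roots $\alpha$ resp. $-\gamma+\delta$. For such a ring $T$: $S_T$ = symmetric algebra of $\widehat X\otimes T$. For ${\mathbf s}=(s_1,\dots,s_l)$: $I({\mathbf s})$ = strictly increasing tuples in $\{1,\dots,l\}$, $\operatorname{ev}(i_1,\dots,i_n)=s_{i_1}\cdots s_{i_n}$; ${\mathbf s}'=(s_1,\dots,s_{l-1})$, $I({\mathbf s})=I({\mathbf s}')\sqcup I({\mathbf s}')s_l$ (appending $l$); $\Delta(z)_\gamma=\Delta(z)_{\gamma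 s_l}=z_\gamma$; $c^\lambda$ multiplies the $\sigma$-component by $\operatorname{ev}(\sigma)(\lambda)\otimes1$; $\alpha_l$ the simple affine root of $s_l$. ${\mathcal X}_T(\emptyset)=S_T$, ${\mathcal X}_T({\mathbf s})=\Delta({\mathcal X}_T({\mathbf s}'))+c^{\alpha_l}(\Delta({\mathcal X}_T({\mathbf s}')))\subset\bigoplus_{\sigma\in I({\mathbf s})}S_T$. *)

(* Defs.v *)
From HB Require Import structures.
From mathcomp Require Import all_boot all_order all_algebra.
From mathcomp Require Import mpoly.
Set Implicit Arguments. Unset Strict Implicit. Unset Printing Implicit Defensive.
Import Order.TTheory GRing.Theory Num.Theory.
Local Open Scope ring_scope.

(* Lattices.  X = Z^r (row vectors), its dual lattice Y = Z^r with the  *)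
(* standard pairing; Xhat = X (+) Z, elements (lambda, k).             *)

Definition pairing (r : nat) (x v : 'rV[int]_r) : int := \sum_(i < r) x 0 i * v 0 i.

Definition Xhat (r : nat) := ('rV[int]_r * int)%type.

(* delta = (0,-1); affine root alpha + n delta = (alpha, -n) *)
Definition aff_root (r : nat) (a : 'rV[int]_r) (n : int) : Xhat r := (a, - n).

Section RootSystem.
Variables (r : nat) (roots : seq 'rV[int]_r) (coroot : 'rV[int]_r -> 'rV[int]_r).

Definition refl (a b : 'rV[int]_r) : 'rV[int]_r := b - pairing b (coroot a) *: a.

Definition is_irred_reduced_root_system : Prop :=
  (  [/\ uniq roots, (0 : 'rV[int]_r) \notin roots & roots != [::]] /\
      {in roots, forall a, pairing a (coroot a) = 2} /\
      {in roots &, forall a b, refl a b \in roots} /\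
      {in roots &, forall a b,
          coroot (refl a b) = coroot b - pairing a (coroot b) *: coroot a} /\
      {in roots &, injective coroot} /\
      {in roots &, forall a b, forall m k : int, m != 0 -> m *: b = k *: a ->
          b = a \/ b = - a} /\
      (* irreducible: no partition into two mutually orthogonal parts *)
      forall P : pred 'rV[int]_r,
        {in roots &, forall a b, P a -> ~~ P b -> pairing b (coroot a) = 0} ->
        all P roots \/ all (predC P) roots).

Variable simple : seq 'rV[int]_r.

Definition int_comb (x : 'rV[int]_r) (c : 'I_(size simple) -> int) :=
  x = \sum_(i < size simple) c i *: simple`_i.

Definition nonneg_comb (x : 'rV[int]_r) :=
  exists c, int_comb x c /\ forall i, 0 <= c i.

Definition is_base : Prop :=
  [/\ all (mem roots) simple, uniq simple,
      forall c, int_comb 0 c -> forall i, c i = 0 &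
      {in roots, forall a, exists c, int_comb a c /\
          ((forall i, 0 <= c i) \/ (forall i, c i <= 0))}].

Definition positive_root (a : 'rV[int]_r) := a \in roots /\ nonneg_comb a.

Definition is_highest_root (g : 'rV[int]_r) : Prop :=
  positive_root g /\ {in roots, forall a, nonneg_comb (g - a)}.

Variable gamma : 'rV[int]_r.

(* Elements s_{alpha,n} are encoded by pairs (alpha, n). *)
Definition in_Shat (p : 'rV[int]_r * int) : bool :=
  ((p.2 == 0) && (p.1 \in simple)) || (p == (gamma, 1)).

(* simple affine root of an element of Shat: alpha for s_{alpha,0},
   -gamma + delta for s_{gamma,1} *)
Definition simple_aff_root (p : 'rV[int]_r * int) : Xhat r :=
  if p == (gamma, 1) then (- gamma, -1) else (p.1, 0).

(* contragredient action of s_{alpha,n} on Xhat: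
   (lambda,k) |-> (lambda,k) - <lambda,alpha^v> (alpha - n delta) *)
Definition saff (p : 'rV[int]_r * int) (x : Xhat r) : Xhat r :=
  let c := pairing x.1 (coroot p.1) in (x.1 - c *: p.1, x.2 - c * p.2).

Section Ring.
Variable T : comNzRingType.

(* Xhat (x) T = T^(r+1) *)
Definition tens (x : Xhat r) : 'rV[T]_(r + 1) :=
  row_mx (map_mx (fun z : int => z%:~R) x.1) (\row_(j < 1) (x.2)%:~R).

(* S_T = symmetric algebra of Xhat (x) T = polynomial ring in r+1 variables *)
Definition S_T := {mpoly T[r + 1]}.

Definition toS (v : 'rV[T]_(r + 1)) : S_T := \sum_(i < r + 1) v 0 i *: 'X_i.

Variable s : seq ('rV[int]_r * int).

(* direct sum over I(s_1..s_k), strictly increasing tuples in {1..k},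
   encoded as subsets of 'I_k (position i <-> s_(i+1)) *)
Definition DS (k : nat) := {ffun {set 'I_k} -> S_T}.

Definition ev (k : nat) (sigma : {set 'I_k}) (x : Xhat r) : Xhat r :=
  foldr (fun i acc => saff (nth (0, 0) s (val i)) acc) x (enum sigma).

Definition Delta (k : nat) (z : DS k) : DS k.+1 :=
  [ffun sigma : {set 'I_k.+1} =>
     z [set i : 'I_k | widen_ord (leqnSn k) i \in sigma]].

Definition cmul (k : nat) (lam : Xhat r) (z : DS k) : DS k :=
  [ffun sigma => toS (tens (ev sigma lam)) * z sigma].

Definition DSadd (k : nat) (z w : DS k) : DS k := [ffun sigma => z sigma + w sigma].

Fixpoint Xpref (k : nat) : DS k -> Prop :=
  match k return DS k -> Prop with
  | 0 => fun _ => True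
  | k'.+1 => fun f => exists x y, Xpref x /\ Xpref y /\
      f = DSadd (Delta x)
                (cmul (simple_aff_root (nth (0, 0) s k')) (Delta y))
  end.

Definition XT : DS (size s) -> Prop := @Xpref (size s).

End Ring.

Section BaseChange.
Variables (T T' : comNzRingType) (phi : {rmorphism T -> T'}).
Variable s : seq ('rV[int]_r * int).
Let F := DS T (size s).
Let F' := DS T' (size s).

(* canonical map (+) S_T (x)_T T' -> (+) S_T', on a formal sum
   sum_j m_j (x) t_j *)
Definition canon (t : seq (F * T')) : F' :=
  \big[@DSadd T' (size s)/[ffun => 0]]_(p <- t)
     [ffun sigma => p.2 *: map_mpoly phi (p.1 sigma)].

(* M (x)_T T' = free T'-module on the set M modulo the T'-span of the
   relations [m + m'] - [m] - [m'] and [a m] - phi(a) [m].  Formal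
   T'-combinations of elements of F are lists; coefficient at x: *)
Definition fcoef (t : seq (F * T')) (x : F) : T' :=
  \sum_(p <- t | p.1 == x) p.2.

Definition rel_add (m m' : F) : seq (F * T') :=
  [:: (DSadd m m', 1); (m, -1); (m', -1)].

Definition rel_scal (a : T) (m : F) : seq (F * T') :=
  [:: ([ffun sigma => a *: m sigma], 1); (m, - phi a)].

Definition is_rel (M : F -> Prop) (g : seq (F * T')) : Prop :=
  (exists m m', [/\ M m, M m' & g = rel_add m m']) \/
  (exists a m, M m /\ g = rel_scal a m).

Definition tensor_zero (M : F -> Prop) (t : seq (F * T')) : Prop :=
  exists rels : seq (T' * seq (F * T')),
    (forall q, q \in rels -> is_rel M q.2) /\
    forall x, fcoef t x = \sum_(q <- rels) q.1 * fcoef q.2 x.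

End BaseChange.
End RootSystem.

Definition aff_roots_nonzero (r : nat) (roots : seq 'rV[int]_r) (T : comNzRingType) :=
  {in roots, forall a, forall n : int, tens T (aff_root a n) != 0}.

Definition two_nzd (T : comNzRingType) := forall x : T, 2 * x = 0 -> x = 0.

(* Main.v *)
Require Import Defs.
From HB Require Import structures.
From mathcomp Require Import all_boot all_order all_algebra.
From mathcomp Require Import mpoly.
From mathcomp Require Import ring.
Import Order.TTheory GRing.Theory Num.Theory.
Local Open Scope ring_scope.
Set Implicit Arguments. Unset Strict Implicit. Unset Printing Implicit Defensive.

Section Gen.
Variables (r : nat) (coroot : 'rV[int]_r -> 'rV[int]_r) (gamma : 'rV[int]_r).
Variable s : seq ('rV[int]_r * int).

Definition restr k (sg : {set 'I_k.+1}) : {set 'I_k} :=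
  [set i : 'I_k | widen_ord (leqnSn k) i \in sg].
Definition wid k (t : {set 'I_k}) : {set 'I_k.+1} := [set widen_ord (leqnSn k) x | x in t].
Definition widm k (t : {set 'I_k}) : {set 'I_k.+1} := ord_max |: wid t.

Lemma max_notin_wid k (t : {set 'I_k}) : ord_max \notin wid t.
Proof.
apply/imsetP => -[j _ /(congr1 val) /=] E.
by have := ltn_ord j; rewrite -E ltnn.
Qed.

Lemma restr_wid k (t : {set 'I_k}) : restr (wid t) = t.
Proof.
apply/setP => i; rewrite inE mem_imset //.
by move=> a b /(congr1 val) /= /val_inj.
Qed.

Lemma restr_widm k (t : {set 'I_k}) : restr (widm t) = t.
Proof.
apply/setP => i; rewrite inE in_setU1 mem_imset //; last first.
  by move=> a b /(congr1 val) /= /val_inj.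
have -> : (widen_ord (leqnSn k) i == ord_max) = false.
  by apply/negbTE; apply/eqP => /(congr1 val) /= E; have := ltn_ord i; rewrite E ltnn.
done.
Qed.

Lemma set_split k (sg : {set 'I_k.+1}) :
  sg = if ord_max \in sg then widm (restr sg) else wid (restr sg).
Proof.
apply/setP => j.
have [jm | jm] := eqVneq j ord_max.
  subst j; case: ifP => H; first by rewrite /widm in_setU1 eqxx.
  by rewrite (negbTE (max_notin_wid _)).
have jk : (j < k)%N.
  have := ltn_ord j; rewrite ltnS leq_eqVlt => /orP [/eqP E|//].
  by case/eqP: jm; apply/val_inj.
have Ej : j = widen_ord (leqnSn k) (Ordinal jk) by apply/val_inj.
have Hw : (j \in wid (restr sg)) = (j \in sg).
  by rewrite Ej /wid mem_imset ?inE // => a b /(congr1 val) /= /val_inj.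
by case: ifP => _; rewrite ?/widm ?in_setU1 ?(negbTE jm) /= Hw.
Qed.

Section Ring.
Variable T : comNzRingType.
Notation F k := (DS r T k).

Definition lo k (u : F k.+1) : F k := [ffun t => u (wid t)].
Definition hi k (u : F k.+1) : F k := [ffun t => u (widm t)].
Definition alpha k := simple_aff_root gamma (nth (0, 0) s k).

Fixpoint P k : F k -> F k :=
  match k return F k -> F k with
  | 0 => fun u => u
  | k'.+1 => fun u => DSadd (Delta (P (lo u))) (cmul coroot s (alpha k') (Delta (P (hi u))))
  end.

Lemma DSaddE k (z w : F k) : DSadd z w = z + w.
Proof. by apply/ffunP => x; rewrite !ffunE. Qed.

Lemma DeltaE k (z : F k) sg : Delta z sg = z (restr sg).
Proof. by rewrite ffunE. Qed.

Lemma P_lin k (a : T) (u v : F k) : P (a *: u + v) = a *: P u + P v.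
Proof.
elim: k a u v => [//|k IH] a u v /=.
have -> : lo (a *: u + v) = a *: lo u + lo v by apply/ffunP => x; rewrite !ffunE.
have -> : hi (a *: u + v) = a *: hi u + hi v by apply/ffunP => x; rewrite !ffunE.
rewrite !IH; apply/ffunP => x; rewrite !ffunE.
rewrite mulrDr scalerDr scalerAr; ring.
Qed.

Lemma P0 k : P (0 : F k) = 0.
Proof.
have H := @P_lin k 1 0 0; rewrite !scale1r !addr0 in H.
by apply/(addrI (P (0 : F k))); rewrite addr0 -H.
Qed.

Lemma PZ k a (u : F k) : P (a *: u) = a *: P u.
Proof. by have := @P_lin k a u 0; rewrite !addr0 P0 addr0. Qed.

Lemma PD k (u v : F k) : P (u + v) = P u + P v.
Proof. by have := @P_lin k 1 u v; rewrite !scale1r. Qed.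

Lemma P_sum k (I : Type) (l : seq I) (f : I -> T) (g : I -> F k) :
  P (\sum_(i <- l) f i *: g i) = \sum_(i <- l) f i *: P (g i).
Proof.
elim: l => [|i l IH]; first by rewrite !big_nil P0.
by rewrite !big_cons P_lin IH.
Qed.

Definition glue k (u1 u2 : F k) : F k.+1 :=
  [ffun sg : {set 'I_k.+1} => if ord_max \in sg then u2 (restr sg) else u1 (restr sg)].

Lemma lo_glue k (u1 u2 : F k) : lo (glue u1 u2) = u1.
Proof. by apply/ffunP => t; rewrite !ffunE (negbTE (max_notin_wid _)) restr_wid. Qed.

Lemma hi_glue k (u1 u2 : F k) : hi (glue u1 u2) = u2.
Proof. by apply/ffunP => t; rewrite !ffunE /widm setU11 restr_widm. Qed.

Lemma Xpref_P k (m : F k) : Xpref coroot gamma s m <-> exists u, m = P u.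
Proof.
elim: k m => [|k IH] m /=; first by split => // _; exists m.
split.
  move=> [x [y [/IH [u1 ->] [/IH [u2 ->] ->]]]].
  by exists (glue u1 u2); rewrite lo_glue hi_glue.
move=> [u ->]; exists (P (lo u)), (P (hi u)); split; first by apply/IH; exists (lo u).
by split => //; apply/IH; exists (hi u).
Qed.

End Ring.

Definition negX (x : Xhat r) : Xhat r := (- x.1, - x.2).

Lemma pairingN (a v : 'rV[int]_r) : pairing (- a) v = - pairing a v.
Proof. by rewrite /pairing -sumrN; apply: eq_bigr => i _; rewrite mxE mulNr. Qed.

Lemma saffN p x : saff coroot p (negX x) = negX (saff coroot p x).
Proof.
rewrite /saff /negX /= pairingN; congr (_, _).
  by rewrite scaleNr opprD opprK.
by rewrite mulNr opprD opprK.
Qed.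

Definition fev (l : seq nat) (x : Xhat r) :=
  foldr (fun n acc => saff coroot (nth (0, 0) s n) acc) x l.

Lemma evE k (sg : {set 'I_k}) x : ev coroot s sg x = fev (map val (enum sg)) x.
Proof. by rewrite /ev /fev foldr_map. Qed.

Lemma fevN l x : fev l (negX x) = negX (fev l x).
Proof. by elim: l => [//|n l IH] /=; rewrite IH saffN. Qed.

Lemma enum_filter n (A : {set 'I_n}) (q : pred nat) :
  (forall j : 'I_n, q (val j) = (j \in A)) -> map val (enum A) = filter q (iota 0 n).
Proof.
move=> Hq; rewrite /enum_mem -enumT -val_enum_ord filter_map.
by congr map; apply: eq_filter => j /=; rewrite /preim /= Hq.
Qed.

Definition qset k (t : {set 'I_k}) : pred nat :=
  fun i => [exists j : 'I_k, (val j == i) && (j \in t)].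

Lemma qsetE k (t : {set 'I_k}) (j : 'I_k) : qset t (val j) = (j \in t).
Proof.
apply/existsP/idP => [[j' /andP [/eqP /val_inj -> //]]|H].
by exists j; rewrite eqxx.
Qed.

Lemma qset_lt k (t : {set 'I_k}) i : qset t i -> (i < k)%N.
Proof. by move=> /existsP [j /andP [/eqP <- _]]; apply: ltn_ord. Qed.

Lemma enum_wid k (t : {set 'I_k}) : map val (enum (wid t)) = map val (enum t).
Proof.
rewrite (enum_filter (q := qset t)); last first.
  move=> j; apply/existsP/imsetP => [[j' /andP [/eqP E H]]|[j' H E]].
    by exists j' => //; apply/val_inj.
  by exists j'; rewrite H E eqxx.
rewrite (enum_filter (q := qset t)); last exact: qsetE.
rewrite -addn1 iotaD filter_cat /= add0n.
case: ifP => [/qset_lt|_]; first by rewrite ltnn.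
by rewrite cats0.
Qed.

Lemma enum_widm k (t : {set 'I_k}) :
  map val (enum (widm t)) = rcons (map val (enum t)) k.
Proof.
rewrite (enum_filter (q := fun i => (i == k) || qset t i)); last first.
  move=> j; rewrite /widm in_setU1; congr orb.
  apply/existsP/imsetP => [[j' /andP [/eqP E H]]|[j' H E]].
    by exists j' => //; apply/val_inj.
  by exists j'; rewrite H E eqxx.
rewrite (enum_filter (q := qset t)); last exact: qsetE.
rewrite -addn1 iotaD filter_cat /= add0n eqxx -cats1; congr (_ ++ _).
apply: eq_in_filter => i; rewrite mem_iota add0n => /andP [_ ik].
by rewrite (ltn_eqF ik).
Qed.

Lemma ev_wid k (t : {set 'I_k}) x : ev coroot s (wid t) x = ev coroot s t x.
Proof. by rewrite !evE enum_wid. Qed.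

Lemma ev_widm k (t : {set 'I_k}) x :
  ev coroot s (widm t) x = ev coroot s t (saff coroot (nth (0, 0) s k) x).
Proof. by rewrite !evE enum_widm /fev foldr_rcons. Qed.


Lemma PSE (T : comNzRingType) k (u : DS r T k.+1) sg :
  P u sg = P (lo u) (restr sg) + toS (tens T (ev coroot s sg (alpha k))) * P (hi u) (restr sg).
Proof. by rewrite /= !ffunE. Qed.

Section Inj.
Variable T : idomainType.
Variable roots : seq 'rV[int]_r.
Hypothesis Hroot : forall p, p \in s -> p.1 \in roots.
Hypothesis Hrefl : forall a b, a \in roots -> b \in roots -> refl coroot a b \in roots.
Hypothesis Halpha : forall p, p \in s -> (simple_aff_root gamma p).1 \in roots.
Hypothesis Hsign : forall p, p \in s ->
  saff coroot p (simple_aff_root gamma p) = negX (simple_aff_root gamma p).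
Hypothesis Haff : aff_roots_nonzero roots T.
Hypothesis H2 : two_nzd T.

Lemma fev_root l x : all (fun n => n < size s)%N l -> x.1 \in roots -> (fev l x).1 \in roots.
Proof.
elim: l => [//|n l IH] /= /andP [ns Hl] Hx.
have := Hrefl (Hroot (mem_nth (0, 0) ns)) (IH Hl Hx).
by rewrite /saff /refl.
Qed.

Lemma tensN x : tens T (negX x) = - tens T x.
Proof.
rewrite /tens /negX /= opp_row_mx; congr row_mx.
  by apply/matrixP => i j; rewrite !mxE intrN.
by apply/matrixP => i j; rewrite !mxE intrN.
Qed.

Lemma toSN (v : 'rV[T]_(r + 1)) : toS (- v) = - toS v.
Proof. by rewrite /toS -sumrN; apply: eq_bigr => i _; rewrite mxE scaleNr. Qed.

Lemma toS_coef (v : 'rV[T]_(r + 1)) i : (toS v)@_U_(i) = v 0 i.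
Proof.
rewrite /toS raddf_sum (bigD1 i) //= mcoeffZ mcoeffXU eqxx mulr1 big1 ?addr0 //.
by move=> j /negbTE ji; rewrite mcoeffZ mcoeffXU ji mulr0.
Qed.

Lemma toS_nz (v : 'rV[T]_(r + 1)) : v != 0 -> toS v != 0.
Proof.
apply: contra => /eqP H; apply/eqP/rowP => i.
by rewrite -toS_coef H mcoeff0 mxE.
Qed.

Lemma tens_nz (x : Xhat r) : x.1 \in roots -> tens T x != 0.
Proof.
move=> Hx; have := Haff Hx (- x.2).
by rewrite /aff_root opprK -surjective_pairing.
Qed.

Lemma a_nz k (t : {set 'I_k}) : (k < size s)%N ->
  toS (tens T (ev coroot s t (alpha k))) != 0.
Proof.
move=> ks; apply/toS_nz/tens_nz; rewrite evE; apply: fev_root.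
  apply/allP => n /mapP [j _ ->]; exact: ltn_trans (ltn_ord j) ks.
exact/Halpha/mem_nth.
Qed.

Lemma a_neg k (t : {set 'I_k}) : (k < size s)%N ->
  ev coroot s (widm t) (alpha k) = negX (ev coroot s (wid t) (alpha k)).
Proof.
move=> ks; rewrite ev_widm ev_wid /alpha Hsign ?mem_nth //.
by rewrite !evE fevN.
Qed.

Lemma two_mpoly (p : {mpoly T[r + 1]}) : p *+ 2 = 0 -> p = 0.
Proof.
move=> H; apply/mpolyP => m; rewrite mcoeff0; apply: H2.
by rewrite mulr_natl -mcoeffMn H mcoeff0.
Qed.

Lemma P_inj k (u : DS r T k) : (k <= size s)%N -> P u = 0 -> u = 0.
Proof.
elim: k u => [//|k IH] u ks Hu.
have ks' : (k < size s)%N by [].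
have Hxy : forall t : {set 'I_k}, P (hi u) t = 0 /\ P (lo u) t = 0.
  move=> t.
  have E1 := PSE u (wid t); have E2 := PSE u (widm t).
  rewrite Hu ffunE restr_wid in E1; rewrite Hu ffunE restr_widm in E2.
  rewrite a_neg // tensN toSN in E2.
  set a := toS _ in E1 E2.
  set X := P (lo u) t in E1 E2; set Y := P (hi u) t in E1 E2 *.
  have Hay : a * Y = 0.
    apply: two_mpoly; rewrite mulr2n.
    have -> : a * Y + a * Y = (X + a * Y) - (X + - a * Y) by ring.
    by rewrite -E1 -E2 subrr.
  have Hy : Y = 0.
    move/eqP: Hay; rewrite mulf_eq0 => /orP [Ha|/eqP //].
    by move: Ha; rewrite /a ev_wid (negbTE (a_nz t ks')).
  split => //; by move: E1; rewrite Hy mulr0 addr0 /X => ->.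
have Hl : lo u = 0 by apply: IH; [exact: ltnW | apply/ffunP => t; rewrite ffunE; case: (Hxy t)].
have Hh : hi u = 0 by apply: IH; [exact: ltnW | apply/ffunP => t; rewrite ffunE; case: (Hxy t)].
apply/ffunP => sg; rewrite ffunE (set_split sg).
case: ifP => _.
  by move/ffunP: Hh => /(_ (restr sg)); rewrite !ffunE.
by move/ffunP: Hl => /(_ (restr sg)); rewrite !ffunE.
Qed.

End Inj.


Lemma mcoeff_sum (T : comNzRingType) n (I : Type) (l : seq I) (f : I -> {mpoly T[n]}) m :
  (\sum_(i <- l) f i)@_m = \sum_(i <- l) (f i)@_m.
Proof. by elim: l => [|i l IH]; rewrite ?big_nil ?mcoeff0 // !big_cons mcoeffD IH. Qed.

Definition eb (T : comNzRingType) k (b : {set 'I_k} * 'X_{1..r + 1}) : DS r T k :=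
  [ffun sg => if sg == b.1 then 'X_[b.2] else 0].

Lemma expand (T : comNzRingType) k (u : DS r T k) (B : seq ({set 'I_k} * 'X_{1..r + 1})) :
  uniq B -> (forall sg m, m \in msupp (u sg) -> (sg, m) \in B) ->
  u = \sum_(b <- B) (u b.1)@_b.2 *: eb T b.
Proof.
move=> uB HB; apply/ffunP => sg; rewrite sum_ffunE; apply/mpolyP => m.
rewrite mcoeff_sum.
have Hterm : forall b : {set 'I_k} * 'X_{1..r + 1},
    (((u b.1)@_b.2 *: eb T b) sg)@_m = if b == (sg, m) then (u sg)@_m else 0.
  move=> [b1 b2]; rewrite ffunE /eb ffunE /= mcoeffZ xpair_eqE.
  have [->|ne] := eqVneq sg b1; rewrite ?eqxx /=.
    rewrite mcoeffX; have [->|ne2] := eqVneq b2 m; first by rewrite mulr1.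
    by rewrite mulr0.
  by rewrite mcoeff0 mulr0.
rewrite (eq_bigr _ (fun b _ => Hterm b)).
have [inB|ninB] := boolP ((sg, m) \in B).
  rewrite (bigD1_seq (sg, m)) //= eqxx big1 ?addr0 // => b /negbTE ->; done.
rewrite big1_seq; last by move=> b /andP [_ bB]; case: eqP => // E; by rewrite -E bB in ninB.
apply: memN_msupp_eq0; apply: contra ninB; exact: HB.
Qed.

Section Map.
Variables (T T' : comNzRingType) (phi : {rmorphism T -> T'}).

Definition mapDS k (u : DS r T k) : DS r T' k := [ffun sg => map_mpoly phi (u sg)].

Lemma tens_map (x : Xhat r) : tens T' x = map_mx phi (tens T x).
Proof.
rewrite /tens map_row_mx; congr row_mx; apply/matrixP => i j; by rewrite !mxE rmorph_int.
Qed.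

Lemma toS_map (x : Xhat r) : map_mpoly phi (toS (tens T x)) = toS (tens T' x).
Proof.
rewrite /toS raddf_sum tens_map; apply: eq_bigr => i _.
change (map_mpoly phi (tens T x 0 i *: 'X_i) = (tens T x ^ phi)%sesqui 0 i *: 'X_i).
rewrite map_mpolyZ (map_mpolyX phi); congr (_ *: _); by rewrite [RHS]mxE.
Qed.

Lemma mapDS_P k (u : DS r T k) : mapDS (P u) = P (mapDS u).
Proof.
elim: k u => [//|k IH] u; apply/ffunP => sg.
rewrite ffunE !PSE rmorphD rmorphM -toS_map.
have -> : lo (mapDS u) = mapDS (lo u) by apply/ffunP => t; rewrite !ffunE.
have -> : hi (mapDS u) = mapDS (hi u) by apply/ffunP => t; rewrite !ffunE.
by rewrite -!IH !ffunE.
Qed.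

Lemma mapDS_e k b : mapDS (eb T (k := k) b) = eb T' b.
Proof.
apply/ffunP => sg; rewrite !ffunE; case: ifP => _; first by rewrite map_mpolyX.
exact: raddf0.
Qed.

Lemma canonE (t : seq (DS r T (size s) * T')) :
  canon phi t = \sum_(p <- t) p.2 *: mapDS p.1.
Proof.
elim: t => [|p t IH].
  by rewrite /canon !big_nil; apply/ffunP => x; rewrite !ffunE.
rewrite /canon !big_cons -/(canon phi t) IH DSaddE; congr (_ + _).
by apply/ffunP => x; rewrite !ffunE.
Qed.

End Map.


Section Tensor.
Variables (T T' : comNzRingType) (phi : {rmorphism T -> T'}).
Notation F := (DS r T (size s)).
Variable M : F -> Prop.
Hypothesis M0 : M 0.
Hypothesis MD : forall m m', M m -> M m' -> M (m + m').
Hypothesis MZ : forall a m, M m -> M (a *: m).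

Definition equiv (t1 t2 : seq (F * T')) :=
  exists rels : seq (T' * seq (F * T')),
    (forall q, q \in rels -> is_rel phi M q.2) /\
    forall x, fcoef t1 x - fcoef t2 x = \sum_(q <- rels) q.1 * fcoef q.2 x.

Definition scl (c : T') (t : seq (F * T')) := [seq (p.1, c * p.2) | p <- t].

Lemma fcoef_nil x : fcoef ([::] : seq (F * T')) x = 0.
Proof. by rewrite /fcoef big_nil. Qed.

Lemma fcoef_cons (p : F * T') t x :
  fcoef (p :: t) x = (if p.1 == x then p.2 else 0) + fcoef t x.
Proof. by rewrite /fcoef big_cons; case: ifP => _; rewrite ?add0r. Qed.

Lemma fcoef_cat (t1 t2 : seq (F * T')) x : fcoef (t1 ++ t2) x = fcoef t1 x + fcoef t2 x.
Proof. by rewrite /fcoef big_cat. Qed.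

Lemma fcoef_scl c (t : seq (F * T')) x : fcoef (scl c t) x = c * fcoef t x.
Proof. by rewrite /fcoef big_map mulr_sumr. Qed.

Lemma equiv_refl t : equiv t t.
Proof. by exists [::]; split => // x; rewrite subrr big_nil. Qed.

Lemma equiv_trans t1 t2 t3 : equiv t1 t2 -> equiv t2 t3 -> equiv t1 t3.
Proof.
move=> [r1 [H1 E1]] [r2 [H2 E2]]; exists (r1 ++ r2); split.
  by move=> q; rewrite mem_cat => /orP [/H1|/H2].
by move=> x; rewrite big_cat /= -E1 -E2 addrA subrK.
Qed.

Lemma equiv_cat t1 s1 t2 s2 : equiv t1 s1 -> equiv t2 s2 -> equiv (t1 ++ t2) (s1 ++ s2).
Proof.
move=> [r1 [H1 E1]] [r2 [H2 E2]]; exists (r1 ++ r2); split.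
  by move=> q; rewrite mem_cat => /orP [/H1|/H2].
by move=> x; rewrite big_cat /= -E1 -E2 !fcoef_cat; ring.
Qed.

Lemma equiv_scl c t1 t2 : equiv t1 t2 -> equiv (scl c t1) (scl c t2).
Proof.
move=> [rl [H E]]; exists [seq (c * q.1, q.2) | q <- rl]; split.
  by move=> q /mapP [q' /H Hq ->].
move=> x; rewrite !fcoef_scl -mulrBr E big_map mulr_sumr.
by apply: eq_bigr => q _; rewrite mulrA.
Qed.

Lemma equiv_ext t1 t2 t1' t2' : (forall x, fcoef t1 x = fcoef t1' x) ->
  (forall x, fcoef t2 x = fcoef t2' x) -> equiv t1 t2 -> equiv t1' t2'.
Proof. by move=> E1 E2 [rl [H E]]; exists rl; split => // x; rewrite -E1 -E2. Qed.

Lemma tz_equiv t t0 : equiv t t0 -> (forall x, fcoef t0 x = 0) -> tensor_zero phi M t.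
Proof. by move=> [rl [H E]] Z; exists rl; split => // x; rewrite -E Z subr0. Qed.

Lemma equiv_add m m' : M m -> M m' -> equiv [:: (m + m', 1)] [:: (m, 1); (m', 1)].
Proof.
move=> Hm Hm'; exists [:: (1, rel_add T' m m')]; split.
  by move=> q; rewrite inE => /eqP -> /=; left; exists m, m'.
move=> x; rewrite big_cons big_nil /= /rel_add -DSaddE !fcoef_cons !fcoef_nil /=.
case: (_ == x); case: (_ == x); case: (_ == x); ring.
Qed.

Lemma equiv_scal a m : M m -> equiv [:: (a *: m, 1)] [:: (m, phi a)].
Proof.
move=> Hm; exists [:: (1, rel_scal phi a m)]; split.
  by move=> q; rewrite inE => /eqP -> /=; right; exists a, m.
have -> : a *: m = [ffun sg => a *: m sg] by apply/ffunP => sg; rewrite !ffunE.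
move=> x; rewrite big_cons big_nil /= /rel_scal !fcoef_cons !fcoef_nil /=.
case: (_ == x); case: (_ == x); ring.
Qed.

Lemma equiv_zero c : equiv [:: (0, c)] [::].
Proof.
exists [:: (- c, rel_add T' 0 0)]; split.
  by move=> q; rewrite inE => /eqP -> /=; left; exists 0, 0.
move=> x; rewrite big_cons big_nil /= /rel_add !fcoef_cons !fcoef_nil /=.
have -> : DSadd (0 : F) 0 = 0 by rewrite DSaddE addr0.
case: (_ == x); ring.
Qed.

Lemma equiv_lin (I : Type) (l : seq I) (f : I -> T) (g : I -> F) c :
  (forall i, M (g i)) ->
  equiv [:: (\sum_(i <- l) f i *: g i, c)] [seq (g i, c * phi (f i)) | i <- l].
Proof.
move=> Hg; elim: l => [|i l IH]; first by rewrite big_nil; exact: equiv_zero.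
have Ms : M (\sum_(j <- l) f j *: g j).
  elim: l {IH} => [|j l IHl]; rewrite ?big_nil ?big_cons //.
  exact: MD (MZ _ (Hg j)) IHl.
rewrite big_cons /=.
apply: equiv_trans (_ : equiv _ [:: (f i *: g i, c); (\sum_(j <- l) f j *: g j, c)]) _.
  have := equiv_scl c (equiv_add (MZ (f i) (Hg i)) Ms).
  by apply: equiv_ext => x; rewrite ?fcoef_scl ?fcoef_cons ?fcoef_nil /=; repeat (case: ifP => _); ring.
apply: (equiv_cat (t1 := [:: (f i *: g i, c)]) (s1 := [:: (g i, c * phi (f i))])) IH.
have := equiv_scl c (equiv_scal (f i) (Hg i)).
by apply: equiv_ext => x; rewrite ?fcoef_scl ?fcoef_cons ?fcoef_nil /=; repeat (case: ifP => _); ring.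
Qed.

End Tensor.


Lemma lift_list (T T' : comNzRingType) (t : seq (DS r T (size s) * T')) :
  (forall p, p \in t -> @XT r coroot gamma T s p.1) ->
  exists tu : seq (DS r T (size s) * T'), t = [seq (P q.1, q.2) | q <- tu].
Proof.
elim: t => [|p t IH] Ht; first by exists [::].
have [u Hu] := (Xpref_P p.1).1 (Ht p (mem_head _ _)).
have [tu Htu] : exists tu, t = [seq (P q.1, q.2) | q <- tu].
  by apply: IH => q Hq; apply: Ht; rewrite inE Hq orbT.
by exists ((u, p.2) :: tu); rewrite /= -Hu -Htu -surjective_pairing.
Qed.

End Gen.

Unset Implicit Arguments.

Theorem lemma6p4 (r : nat) (roots : seq 'rV[int]_r)
  (coroot : 'rV[int]_r -> 'rV[int]_r) (simple : seq 'rV[int]_r)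
  (gamma : 'rV[int]_r)
  (HR : is_irred_reduced_root_system roots coroot)
  (HPi : is_base roots simple)
  (Hgamma : is_highest_root roots simple gamma)
  (T T' : idomainType) (phi : {rmorphism T -> T'})
  (H2 : two_nzd T) (H2' : two_nzd T')
  (Haff : aff_roots_nonzero roots T) (Haff' : aff_roots_nonzero roots T')
  (s : seq ('rV[int]_r * int))
  (Hs : all (in_Shat simple gamma) s) :
  (* image of X_T(s) (x)_T T' is X_T'(s) *)
  (forall y, @XT r coroot gamma T' s y <->
     exists t : seq (DS r T (size s) * T'),
       (forall p, p \in t -> @XT r coroot gamma T s p.1) /\
       y = @canon r T T' phi s t) /\
  (* and X_T(s) (x)_T T' -> (+) S_T' is injective *)
  (forall t : seq (DS r T (size s) * T'),
     (forall p, p \in t -> @XT r coroot gamma T s p.1) ->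
     @canon r T T' phi s t = 0 ->
     @tensor_zero r T T' phi s (@XT r coroot gamma T s) t).
Proof.
case: HR => _ [Hpair [Hrefl _]].
case: HPi => Hsimp _ _ _.
case: Hgamma => [[Hgr _] _].
have Hsr : forall a, a \in simple -> a \in roots by move=> a /(allP Hsimp).
have Hshat : forall p, p \in s -> ((p.2 == 0) && (p.1 \in simple)) || (p == (gamma, 1)).
  by move=> p /(allP Hs).
have Hroot : forall p, p \in s -> p.1 \in roots.
  move=> p /Hshat /orP [/andP [_ /Hsr //]|/eqP -> //].
have Hrefl' : forall a b, a \in roots -> b \in roots -> refl coroot a b \in roots.
  by move=> a b Ha Hb; apply: Hrefl.
have Hng : - gamma \in roots.
  have := Hrefl' _ _ Hgr Hgr; rewrite /refl (Hpair _ Hgr).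
  by rewrite scaler_nat mulr2n opprD addrA subrr add0r.
have Halpha : forall p, p \in s -> (simple_aff_root gamma p).1 \in roots.
  move=> p /Hshat /orP [/andP [/eqP p2 /Hsr Hp]|/eqP ->].
    by rewrite /simple_aff_root; case: eqP.
  by rewrite /simple_aff_root eqxx.
have Hsign : forall p, p \in s ->
    saff coroot p (simple_aff_root gamma p) = negX (simple_aff_root gamma p).
  move=> p /Hshat /orP [/andP [/eqP p2 /Hsr Hp]|/eqP ->].
    rewrite /simple_aff_root; case: eqP => [E|_]; first by rewrite E in p2.
    rewrite /saff /negX /= (Hpair _ Hp) p2 mulr0 subr0 oppr0.
    by rewrite scaler_nat mulr2n opprD addrA subrr add0r.
  rewrite /simple_aff_root eqxx /saff /negX /= pairingN (Hpair _ Hgr) !opprK.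
  by rewrite scaleNr opprK scaler_nat mulr2n addrA addNr add0r; congr (_, _).
have PinjT' := P_inj Hroot Hrefl' Halpha Hsign Haff' H2'.
have XTP : forall (R : comNzRingType) (m : DS r R (size s)),
    @XT r coroot gamma R s m <-> exists u, m = P coroot gamma s u.
  by move=> R m; apply: Xpref_P.
have canonP : forall tu : seq (DS r T (size s) * T'),
    canon phi [seq (P coroot gamma s q.1, q.2) | q <- tu] =
    P coroot gamma s (\sum_(q <- tu) q.2 *: mapDS phi q.1).
  move=> tu; rewrite canonE big_map P_sum; apply: eq_bigr => q _.
  by rewrite mapDS_P.
split.
  move=> y; split.
    move=> /XTP [v ->].
    set B := undup [seq (tau, mo) | tau <- enum {set 'I_(size s)}, mo <- msupp (v tau)].
    exists [seq (P coroot gamma s (eb T b), (v b.1)@_b.2) | b <- B]; split.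
      by move=> p /mapP [b _ ->]; apply/XTP; exists (eb T b).
    rewrite canonE big_map.
    have uB : uniq B by apply: undup_uniq.
    have HB : forall sg m, m \in msupp (v sg) -> (sg, m) \in B.
      move=> sg m Hm; rewrite mem_undup.
      by apply/allpairsPdep; exists sg, m; rewrite mem_enum.
    rewrite {1}(expand uB HB) P_sum; apply: eq_bigr => b _.
    by rewrite mapDS_P mapDS_e.
  move=> [t [Ht ->]].
  have [tu ->] := lift_list Ht.
  by rewrite canonP; apply/XTP; eexists.
move=> t Ht H0.
have [tu Etu] := lift_list Ht.
set W := \sum_(q <- tu) q.2 *: mapDS phi q.1.
have W0 : W = 0.
  apply: (PinjT' (size s)) => //; by rewrite -canonP -Etu.
set B := undup (flatten [seq [seq (tau, mo) | tau <- enum {set 'I_(size s)}, mo <- msupp (q.1 tau)] | q : (DS r T (size s) * T') <- tu]).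
have uB : uniq B by apply: undup_uniq.
have HB : forall q, q \in tu -> forall sg m, m \in msupp (q.1 sg) -> (sg, m) \in B.
  move=> q Hq sg m Hm; rewrite mem_undup; apply/flattenP.
  exists [seq (tau, mo) | tau <- enum {set 'I_(size s)}, mo <- msupp (q.1 tau)].
    by apply/mapP; exists q.
  by apply/allpairsPdep; exists sg, m; rewrite mem_enum.
have M0 : @XT r coroot gamma T s 0 by apply/XTP; exists 0; rewrite P0.
have MD : forall m m', @XT r coroot gamma T s m -> @XT r coroot gamma T s m' ->
    @XT r coroot gamma T s (m + m').
  by move=> m m' /XTP [u ->] /XTP [u' ->]; apply/XTP; exists (u + u'); rewrite PD.
have MZ : forall a m, @XT r coroot gamma T s m -> @XT r coroot gamma T s (a *: m).
  by move=> a m /XTP [u ->]; apply/XTP; exists (a *: u); rewrite PZ.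
apply: (tz_equiv (t0 := flatten [seq [seq (P coroot gamma s (eb T b), q.2 * phi ((q.1 b.1)@_b.2)) | b <- B] | q : (DS r T (size s) * T') <- tu])).
  rewrite Etu.
  have Hexp : forall q, q \in tu -> q.1 = \sum_(b <- B) (q.1 b.1)@_b.2 *: eb T b.
    by move=> q Hq; apply: expand => //; apply: HB.
  clearbody B; clear Etu W0 W HB; move: Hexp.
  elim: tu => [|q tu IH] Hexp; first exact: equiv_refl.
  rewrite /= -cat1s.
  apply: equiv_cat; last by apply: IH => q' Hq'; apply: Hexp; rewrite inE Hq' orbT.
  rewrite {1}(Hexp q (mem_head _ _)) P_sum.
  have := equiv_lin phi M0 MD MZ B (fun b => (q.1 b.1)@_b.2) (g := fun b => P coroot gamma s (eb T b)) q.2.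
  by apply => b; apply/XTP; exists (eb T b).
move=> x; rewrite /fcoef big_flatten /= big_map.
rewrite (eq_bigr (fun i : DS r T (size s) * T' => \sum_(j <- B | P coroot gamma s (eb T j) == x) i.2 * phi ((i.1 j.1)@_j.2))); last by move=> i _; rewrite big_map.
rewrite exchange_big /= big1 // => b _.
have : (W b.1)@_b.2 = 0 by rewrite W0 ffunE mcoeff0.
rewrite /W sum_ffunE mcoeff_sum => E; apply: etrans E; apply: eq_bigr => q _.
by rewrite ffunE mcoeffZ ffunE mcoeff_map_mpoly.
Qed.
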